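(* Let $A$ be a finite tree rooted at $e$, with all arcs directed from the root towards the leaves, and let $R\subseteq V(A)$ be a set of destinations containing all leaves of $A$. Let $u\neq e$ be a vertex of $A$ having $\ell$ children $u_1,\dots,u_\ell$, and let $D\subseteq V(A)$. If $D$ is sub-optimal for $u$, then $D$ is sub-optimal for $u_i$ for every $i$, $1\le i\le\ell$.
   Context: Setting (multicast with diffusing nodes): $A$ is a multicast tree for a request $(e,R)$: a tree rooted at the source $e$, arcs directed away from $e$, whose leaves lie in the destination set $R$. A set $D\subseteq V(A)$ is a set of diffusing (branching) nodes. The solution $\mathcal{S}(D)$ is a set of directed paths in $A$ such that: every node of $R$ is the final extremity of exactly one path; every node of $D$ is the final extremity of at most one path; the origin of each path is either $e$ or a node of $D$ which is itself the final extremity of some path; a node of $D$ lies on a path only as its origin or final extremity. As in the paper, $\mathcal{S}(D)$ is taken to be the solution in which each vertex $x\neq e$ of $R\cup D$ is the final extremity of exactly one path, whose origin is the nearest proper ancestor of $x$ belonging to $D\cup\{e\}$. For a vertex $u$, $A^u$ is the subtree of $A$ rooted at $u$, and for $u\neq e$, $a^u$ is the arc joining the parent of $u$ to $u$. The path number $\mathrm{pn}(u)$ is the number of paths of $\mathcal{S}(D)$ that pass through $u$ or terminate at $u$. The window of $\mathcal{S}(D)$ on arc $a^u$ is the triple $(\mathrm{pn}(u),\ |D\cap V(A^u)|,\ \mathrm{load})$, where $\mathrm{load}=\sum_{w\in V(A^u)}\mathrm{pn}(w)$ is the load of $\mathcal{S}(D)$ in $A^u$ (the number of pairs (path, arc)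 with the path using the arc, over the arcs of $A^u$ together with $a^u$). Sub-optimality: $D$ is sub-optimal for a vertex $u\neq e$ (i.e. for $A^u$) iff for every $D'\subseteq V(A)$ whose window $(b',d',\mathrm{load}')$ on $a^u$ satisfies $b'=b$ and $d'=d$, one has $\mathrm{load}\le\mathrm{load}'$, where $(b,d,\mathrm{load})$ is the window of $\mathcal{S}(D)$ on $a^u$. *)

(* Defs.v *)
From mathcomp Require Import all_boot.
Set Implicit Arguments. Unset Strict Implicit. Unset Printing Implicit Defensive.

(* A finite rooted tree on the vertex finType V is given by its root e and a
   parent map par : V -> V; its arcs are (par v, v) for v <> e, directed away
   from the root. *)
Definition is_rooted_tree (V : finType) (e : V) (par : V -> V) : Prop :=
  par e = e /\ forall v : V, exists k : nat, iter k par v = e.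

Section Tree.
Variables (V : finType) (e : V) (par : V -> V).

(* w is an ancestor of x (reflexive): w = par^k x for some k < |V|
   (depths in a tree on |V| vertices are < |V|). *)
Definition anc (w x : V) : bool := [exists k : 'I_#|V|, iter k par x == w].
Definition sanc (w x : V) : bool := anc w x && (w != x).
Definition child (w v : V) : bool := (w != e) && (par w == v).
Definition leaf (v : V) : bool := [forall w, ~~ child w v].
Definition subtree (u : V) : {set V} := [set w | anc u w].

Variables (R D : {set V}).
(* branching points available as path origins *)
Definition origin_pt (a : V) : bool := (a \in D) || (a == e).
Definition nearest_origin (a x : V) : bool :=
  [&& sanc a x, origin_pt a &
      [forall y, (sanc a y && sanc y x) ==> ~~ origin_pt y]].
(* The solution S(D): one path for each x ≠ e in R ∪ D, from its nearest
   proper ancestor in D ∪ {e} to x.  The path of x passes through or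
   terminates at w iff w lies on it and is not its origin. *)
Definition path_hits (x w : V) : bool :=
  [exists a, nearest_origin a x && sanc a w && anc w x].
Definition pn (w : V) : nat :=
  #|[set x | [&& x \in R :|: D, x != e & path_hits x w]]|.
(* load of S(D) in A^u (arcs of A^u together with a^u) *)
Definition load (u : V) : nat := \sum_(w in subtree u) pn w.
Definition window (u : V) : nat * nat * nat :=
  (pn u, #|D :&: subtree u|, load u).
End Tree.

Definition suboptimal (V : finType) (e : V) (par : V -> V) (R D : {set V})
  (u : V) : Prop :=
  forall D' : {set V},
    (window e par R D' u).1.1 = (window e par R D u).1.1 ->
    (window e par R D' u).1.2 = (window e par R D u).1.2 ->
    (window e par R D u).2 <= (window e par R D' u).2.

(* Main.v *)
Require Import Defs.
From mathcomp Require Import all_boot.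
Set Implicit Arguments. Unset Strict Implicit. Unset Printing Implicit Defensive.

Section TreeFacts.
Variables (V : finType) (e : V) (par : V -> V).
Hypothesis Htree : is_rooted_tree e par.

Lemma iter_e k : iter k par e = e.
Proof. case: Htree => He _; elim: k => //= k ->; exact He. Qed.

Lemma ancP w x : reflect (exists k, iter k par x = w) (anc par w x).
Proof.
apply: (iffP existsP) => [[k /eqP <-]|[k <-]]; first by exists k.
have Hc : fconnect par x (iter k par x) by apply: fconnect_iter.
have Hk := leq_trans (findex_max Hc) (max_card _).
by exists (Ordinal Hk); rewrite /= iter_findex.
Qed.

Lemma anc_refl x : anc par x x.
Proof. by apply/ancP; exists 0. Qed.

Lemma anc_par x : anc par (par x) x.
Proof. by apply/ancP; exists 1. Qed.

Lemma anc_e x : anc par e x.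
Proof. case: Htree => _ H; case: (H x) => k Hk; apply/ancP; by exists k. Qed.

Lemma anc_trans a w x : anc par a w -> anc par w x -> anc par a x.
Proof.
move=> /ancP[l Hl] /ancP[k Hk]; apply/ancP; exists (l + k); by rewrite iterD Hk.
Qed.

Lemma iter_cycle n w : 0 < n -> iter n par w = w -> w = e.
Proof.
move=> n0 Hn; case: Htree => _ H; case: (H w) => m Hm.
have Hnm : forall t, iter (n * t) par w = w.
  elim=> [|t IH]; first by rewrite muln0.
  by rewrite mulnS iterD IH Hn.
have Hle : m <= n * m by rewrite leq_pmull.
by rewrite -(Hnm m) -(subnK Hle) iterD Hm iter_e.
Qed.

Lemma anc_antisym a w : anc par a w -> anc par w a -> a = w.
Proof.
move=> /ancP[k Hk] /ancP[l Hl].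
case: k Hk => [|k] Hk; first by rewrite -Hk.
have He : w = e by apply: (@iter_cycle (l + k.+1)); [rewrite addnS | rewrite iterD Hk].
by rewrite -Hk He iter_e.
Qed.

Lemma anc_total a w x : anc par a x -> anc par w x -> anc par a w || anc par w a.
Proof.
move=> /ancP[i Hi] /ancP[j Hj]; case: (leqP i j) => Hij.
  apply/orP; right; apply/ancP; exists (j - i); by rewrite -Hi -iterD subnK.
apply/orP; left; apply/ancP; exists (i - j); rewrite -Hj -iterD subnK //; exact: ltnW.
Qed.

Lemma anc_step y c : anc par y c -> y != c -> anc par y (par c).
Proof.
move=> /ancP[[|k] Hk] Hne; first by rewrite -Hk eqxx in Hne.
by apply/ancP; exists k; rewrite -iterSr.
Qed.

Lemma anc_of_e w : anc par w e -> w = e.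
Proof. by move=> /ancP[k <-]; rewrite iter_e. Qed.

Lemma par_fix v : par v = v -> v = e.
Proof. by move=> H; apply: (@iter_cycle 1). Qed.

Lemma sanc_anc a x : sanc par a x -> anc par a x.
Proof. by case/andP. Qed.

Lemma nearest_exists (X : {set V}) x : x != e -> exists a, nearest_origin e par X a x.
Proof.
move=> xe.
have exP : exists k, (0 < k) && origin_pt e X (iter k par x).
  case: Htree => _ H; case: (H x) => m Hm; exists m.
  case: m Hm => [|m] Hm; first by rewrite /= in Hm; rewrite Hm eqxx in xe.
  by rewrite /origin_pt Hm eqxx orbT.
case: (ex_minnP exP) => k0 /andP[k0p Hor] Hmin.
exists (iter k0 par x); apply/and3P; split => //.
  apply/andP; split; first by apply/ancP; exists k0.
  apply/eqP => Hx; move: xe; by rewrite -(iter_cycle k0p Hx) eqxx.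
apply/forallP => y; apply/implyP => /andP[/andP[Hay Hne] /andP[/ancP[j Hj] Hyx]].
apply/negP => Hoy.
have j0 : 0 < j by case: j Hj => [|j] //= Hj; rewrite Hj eqxx in Hyx.
have Hle : k0 <= j by apply: Hmin; rewrite j0 Hj.
have Hya : anc par y (iter k0 par x) by apply/ancP; exists (j - k0); rewrite -iterD subnK.
by move: Hne; rewrite (anc_antisym Hay Hya) eqxx.
Qed.

Definition phit (X : {set V}) x w :=
  [&& x != e, anc par w x &
      [forall y, (anc par w y && sanc par y x) ==> ~~ origin_pt e X y]].

Lemma path_hitsE X x w : path_hits e par X x w = phit X x w.
Proof.
apply/existsP/idP.
  case=> a /andP[/andP[Hn Haw] Hwx].
  case/and3P: Hn => Hax Hoa Hf.
  apply/and3P; split => //.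
  - apply/eqP => xe; case/andP: Hax => Hax Hne; move: Hne; rewrite xe in Hax *; by rewrite (anc_of_e Hax) eqxx.
  - apply/forallP => y; apply/implyP => /andP[Hwy Hyx].
    move/forallP: Hf => /(_ y) /implyP; apply; rewrite Hyx andbT.
    case/andP: Haw => Haw Hne; apply/andP; split; first exact: anc_trans Haw Hwy.
    apply/eqP => Hay; move: Hne; rewrite Hay in Haw *.
    by rewrite (anc_antisym Haw Hwy) eqxx.
case/and3P => xe Hwx Hf.
case: (nearest_exists X xe) => a Hn; exists a; rewrite Hn Hwx andbT /=.
case/and3P: Hn => Hax Hoa _.
case/orP: (anc_total (sanc_anc Hax) Hwx) => Haw.
  apply/andP; split => //; apply/eqP => Hae; rewrite Hae in Hax Hoa.
  by move/forallP/(_ w)/implyP: Hf; rewrite anc_refl Hax Hoa => /(_ isT).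
by move/forallP/(_ a)/implyP: Hf; rewrite Haw Hax Hoa => /(_ isT).
Qed.

Lemma pnE R X w : pn e par R X w = #|[set x | (x \in R :|: X) && phit X x w]|.
Proof.
rewrite /pn; apply: eq_card => x; rewrite !inE path_hitsE /phit.
by case: (x != e); rewrite ?andbF ?andbT.
Qed.
End TreeFacts.

Section Main.
Variables (V : finType) (e : V) (par : V -> V).
Hypothesis Htree : is_rooted_tree e par.
Variables (R : {set V}) (u ui : V).
Hypothesis Hu : u != e.
Hypothesis Hc : child e par ui u.

Lemma anc_ne w y : w != e -> anc par w y -> y != e.
Proof. move=> Hw Hwy; apply/eqP => ye; rewrite ye in Hwy; by rewrite (anc_of_e Htree Hwy) eqxx in Hw. Qed.

Lemma pn_local (X Y : {set V}) w : w != e -> (forall y, anc par w y -> (y \in X) = (y \in Y)) ->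
  pn e par R X w = pn e par R Y w.
Proof.
move=> Hw H; rewrite !(pnE Htree); apply: eq_card => x; rewrite !inE /phit.
case Hwx: (anc par w x); rewrite ?andbF //= H //.
congr (_ && (_ && _)); apply: eq_forallb => y.
case Hwy: (anc par w y) => //=; rewrite /origin_pt H //.
Qed.

Lemma ui_ne : ui != e. Proof. by case/andP: Hc. Qed.
Lemma par_ui : par ui = u. Proof. by case/andP: Hc => _ /eqP. Qed.
Lemma anc_u_ui : anc par u ui. Proof. rewrite -par_ui; exact: anc_par. Qed.
Lemma ui_neq_u : ui != u.
Proof. apply/eqP => H; move: ui_ne; have := par_ui; rewrite H => /(par_fix Htree) ->; by rewrite eqxx. Qed.
Lemma not_anc_ui_u : ~~ anc par ui u.
Proof. apply/negP => H; move: ui_neq_u; by rewrite (anc_antisym Htree H anc_u_ui) eqxx. Qed.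

Lemma between y x : anc par ui x -> anc par y x -> anc par u y -> y != u -> anc par ui y.
Proof.
move=> Hux Hyx Huy Hne; case/orP: (anc_total Hyx Hux) => // Hyu.
case: (eqVneq y ui) => [->|Hyn]; first exact: anc_refl.
have Hyp := anc_step Hyu Hyn; rewrite par_ui in Hyp.
by move: Hne; rewrite (anc_antisym Htree Hyp Huy) eqxx.
Qed.

Lemma key (X : {set V}) x : anc par ui x -> phit e par X x u = (u \notin X) && phit e par X x ui.
Proof.
move=> Hux; rewrite /phit Hux (anc_trans anc_u_ui Hux) /=.
case: (x != e); rewrite ?andbF //=.
have Hux' : sanc par u x.
  rewrite /sanc (anc_trans anc_u_ui Hux) /=; apply/eqP => Hx; rewrite -Hx in Hux.
  by move: not_anc_ui_u; rewrite Hux.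
apply/forallP/idP.
  move=> H; apply/andP; split.
    by move: (H u); rewrite anc_refl Hux' /= /origin_pt negb_or => /andP[].
  apply/forallP => y; apply/implyP => /andP[Huy Hyx]; move: (H y).
  by rewrite (anc_trans anc_u_ui Huy) Hyx.
case/andP => HuX /forallP H y; apply/implyP => /andP[Huy Hyx].
case: (eqVneq y u) => [->|Hyu]; first by rewrite /origin_pt negb_or HuX.
have Hy := between Hux (sanc_anc Hyx) Huy Hyu.
by move: (H y); rewrite Hy Hyx.
Qed.

Lemma pn_u (X Y : {set V}) : (forall y, anc par u y -> ~~ anc par ui y -> (y \in X) = (y \in Y)) ->
  pn e par R X ui = pn e par R Y ui -> pn e par R X u = pn e par R Y u.
Proof.
move=> H Hui; rewrite !(pnE Htree).
rewrite -(cardsID (subtree par ui) [set x | _ && _]).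
rewrite -(cardsID (subtree par ui) [set x | (x \in R :|: Y) && _]).
have HuXY : (u \in X) = (u \in Y) by apply: H; [exact: anc_refl | exact: not_anc_ui_u].
congr (_ + _).
  have E : forall Z : {set V}, [set x | (x \in R :|: Z) && phit e par Z x u] :&: subtree par ui
     = if u \in Z then set0 else [set x | (x \in R :|: Z) && phit e par Z x ui].
    move=> Z; apply/setP => x.
    case HuZ: (u \in Z); rewrite !inE; case Hx: (anc par ui x);
      rewrite ?andbT ?andbF ?key ?HuZ //= ?andbF //.
    by rewrite /phit Hx !andbF.
  rewrite !E HuXY; case: (u \in Y) => //.
  by rewrite -!(pnE Htree).
apply: eq_card => x; rewrite !inE.
case Hx: (anc par ui x) => //=.
case Hux: (anc par u x); last by rewrite /phit Hux !andbF.
rewrite H ?Hx //; congr (_ && _); rewrite /phit; congr (_ && (_ && _)).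
apply: eq_forallb => y; case Huy: (anc par u y) => //=.
case Hyx: (sanc par y x) => //=.
have Hy : ~~ anc par ui y by apply/negP => Hy; move: Hx; rewrite (anc_trans Hy (sanc_anc Hyx)).
by rewrite /origin_pt H.
Qed.

Lemma load_dec (X : {set V}) : load e par R X u =
  pn e par R X u + load e par R X ui +
  \sum_(w in subtree par u :\: subtree par ui | w != u) pn e par R X w.
Proof.
rewrite /load (big_setID (subtree par ui)) /=.
have -> : subtree par u :&: subtree par ui = subtree par ui.
  apply/setIidPr/subsetP => x; rewrite !inE => H; exact: anc_trans anc_u_ui H.
rewrite [X in _ + X](bigD1 u) /=; last by rewrite /subtree !inE anc_refl (negbTE not_anc_ui_u).
by rewrite addnA [pn _ _ _ _ _ + _]addnC.
Qed.


Lemma main_sec (D : {set V}) : suboptimal e par R D u -> suboptimal e par R D ui.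
Proof.
move=> Hs D' H1 H2; rewrite /= in H1 H2 *.
rewrite leqNgt; apply/negP => Hlt.
set D2 := (D :\: subtree par ui) :|: (D' :&: subtree par ui).
have Hin : forall y, anc par ui y -> (y \in D2) = (y \in D').
  by move=> y Hy; rewrite /D2 /subtree !inE Hy /= andbT.
have Hout : forall y, ~~ anc par ui y -> (y \in D2) = (y \in D).
  by move=> y Hy; rewrite /D2 /subtree !inE (negbTE Hy) /= andbF orbF.
have Hpn_ui : pn e par R D2 ui = pn e par R D ui.
  by rewrite -H1; apply: pn_local ui_ne _ => y Hy; apply: Hin.
have Hpnu : pn e par R D2 u = pn e par R D u.
  by apply: pn_u Hpn_ui => y _ Hy; apply: Hout.
have Hsub : forall x, anc par ui x -> anc par u x.
  move=> x Hx; exact: anc_trans anc_u_ui Hx.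
have Hcard : #|D2 :&: subtree par u| = #|D :&: subtree par u|.
  rewrite -(cardsID (subtree par ui) (D2 :&: _)) -(cardsID (subtree par ui) (D :&: subtree par u)).
  have -> : D2 :&: subtree par u :&: subtree par ui = D' :&: subtree par ui.
    apply/setP => x; rewrite /subtree !inE.
    case Hx: (anc par ui x); rewrite ?andbF ?andbT //= (Hsub _ Hx) andbT.
    by have := Hin x Hx; rewrite /D2 /subtree !inE.
  have -> : D :&: subtree par u :&: subtree par ui = D :&: subtree par ui.
    apply/setP => x; rewrite /subtree !inE.
    by case Hx: (anc par ui x); rewrite ?andbF ?andbT //= (Hsub _ Hx) andbT.
  have -> : D2 :&: subtree par u :\: subtree par ui = D :&: subtree par u :\: subtree par ui.
    apply/setP => x; rewrite /subtree !inE.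
    by case: (anc par ui x); rewrite /= ?andbF ?andbT ?orbF.
  by rewrite H2.
have Hload : load e par R D2 u < load e par R D u.
  rewrite !load_dec Hpnu.
  have -> : \sum_(w in subtree par u :\: subtree par ui | w != u) pn e par R D2 w =
            \sum_(w in subtree par u :\: subtree par ui | w != u) pn e par R D w.
    apply: eq_bigr => w /andP[]; rewrite /subtree !inE => /andP[Hw1 Hw2] Hwu.
    apply: pn_local; first exact: anc_ne Hu Hw2.
    move=> y Hy; apply: Hout; apply/negP => Huy.
    case/orP: (anc_total Huy Hy) => Hc2; first by rewrite Hc2 in Hw1.
    case: (eqVneq w ui) => [Hwe|Hwn]; first by rewrite Hwe anc_refl in Hw1.
    have Hp := anc_step Hc2 Hwn; rewrite par_ui in Hp.
    by move: Hwu; rewrite (anc_antisym Htree Hp Hw2) eqxx.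
  have -> : load e par R D2 ui = load e par R D' ui.
    apply: eq_bigr => w; rewrite /subtree inE => Hw.
    apply: pn_local; first exact: anc_ne ui_ne Hw.
    move=> y Hy; apply: Hin; exact: anc_trans Hw Hy.
  by rewrite ltn_add2r ltn_add2l.
by move: (Hs D2); rewrite /= Hpnu Hcard => /(_ erefl erefl); rewrite leqNgt Hload.
Qed.

End Main.


Theorem mainTheorem3 (V : finType) (e : V) (par : V -> V)
  (Htree : is_rooted_tree e par) (R : {set V})
  (HR : forall v : V, leaf e par v -> v \in R)
  (u : V) (Hu : u != e) (D : {set V}) :
  suboptimal e par R D u ->
  forall ui : V, child e par ui u -> suboptimal e par R D ui.
Proof.
move=> Hs ui Hc; exact: (main_sec Htree Hu Hc Hs).
Qed.
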